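(* Let $\mathcal{C}$ be a category with finite limits and $N,M$ classes of morphisms in $\mathcal{C}$. Assume $N \perp M$. Then $Lw^{\cong}(N) \perp Sp^{\cong}(M)$ in $\overline{\mathrm{Pro}}(\mathcal{C})$.
   Context: $\overline{\mathrm{Pro}}(\mathcal{C})$ has objects diagrams $F:A\to\mathcal{C}$ with $A$ a cofinite directed poset of infinite height (poset as category with $u\to v$ iff $u\ge v$), and morphisms $F^A\to G^B$ the classes $[\alpha,\phi]$ of pairs with $\alpha:B\to A$ strictly increasing and $\phi:F\circ\alpha\to G$ natural, identified along chains of relations $(\alpha',\phi')\ge(\alpha,\phi)$; it is equivalent to $\mathrm{Pro}(\mathcal{C})$. $Lw^{\cong}(N)$: morphisms isomorphic to $[id,\phi]$ with $\phi$ a natural transformation levelwise in $N$. $Sp^{\cong}(M)$: morphisms isomorphic to $[id,\phi]$ with $\phi:X\to Y$ such that $X_t\to Y_t\times_{\lim_{s<t}Y_s}\lim_{s<t}X_s$ is in $M$ for every $t$. $K\perp L$ means every morphism in $K$ has the left lifting property with respect to every morphism in $L$. *)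

(* Defs.v *)
From Stdlib Require Import Relations Classical List.

Set Implicit Arguments.
Unset Strict Implicit.

Record Category := {
  Ob :> Type;
  Hom : Ob -> Ob -> Type;
  idm : forall x, Hom x x;
  comp : forall x y z, Hom y z -> Hom x y -> Hom x z;
  comp_id_l : forall x y (f : Hom x y), comp (idm y) f = f;
  comp_id_r : forall x y (f : Hom x y), comp f (idm x) = f;
  comp_assoc : forall w x y z (h : Hom y z) (g : Hom x y) (f : Hom w x),
      comp h (comp g f) = comp (comp h g) f }.
Arguments Hom {c} _ _.
Arguments idm {c} x.
Arguments comp {c x y z} _ _.
Arguments comp_id_l {c x y} f.
Arguments comp_id_r {c x y} f.
Arguments comp_assoc {c w x y z} h g f.

Definition MorClass (C : Category) := forall x y : Ob C, @Hom C x y -> Prop.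

Definition perp (C : Category) (K L : MorClass C) : Prop :=
  forall (a b : Ob C) (i : Hom a b) (x y : Ob C) (p : Hom x y),
    K a b i -> L x y p ->
    forall (u : Hom a x) (v : Hom b y), comp p u = comp v i ->
      exists h : Hom b x, comp h i = u /\ comp p h = v.

Record Functor (J C : Category) := {
  fob : Ob J -> Ob C;
  fmap : forall x y : Ob J, Hom x y -> Hom (fob x) (fob y);
  fmap_id : forall x, fmap (idm x) = idm (fob x);
  fmap_comp : forall x y z (g : Hom y z) (f : Hom x y),
      fmap (comp g f) = comp (fmap g) (fmap f) }.
Arguments fob {J C} _ _.
Arguments fmap {J C} _ {x y} _.

Definition FiniteT (T : Type) : Prop := exists l : list T, forall x, In x l.

Definition FiniteCat (J : Category) : Prop :=
  FiniteT (Ob J) /\ forall x y : Ob J, FiniteT (Hom x y).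

Definition is_limit (J C : Category) (D : Functor J C) (L : Ob C)
    (pi : forall j, Hom L (fob D j)) : Prop :=
  (forall i j (f : Hom i j), comp (fmap D f) (pi i) = pi j) /\
  (forall (L' : Ob C) (pi' : forall j, Hom L' (fob D j)),
     (forall i j (f : Hom i j), comp (fmap D f) (pi' i) = pi' j) ->
     exists! u : Hom L' L, forall j, comp (pi j) u = pi' j).

Definition has_finite_limits (C : Category) : Prop :=
  forall J : Category, FiniteCat J -> forall D : Functor J C,
    exists (L : Ob C) (pi : forall j, Hom L (fob D j)), @is_limit J C D L pi.

Record CDPoset := {
  pt :> Type;
  ple : pt -> pt -> Prop;
  ple_refl : forall a, ple a a;
  ple_antisym : forall a b, ple a b -> ple b a -> a = b;
  ple_trans : forall a b c, ple a b -> ple b c -> ple a c;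
  pdir_ne : inhabited pt;
  pdir_ub : forall a b, exists c, ple a c /\ ple b c;
  pcofinite : forall t, exists l : list pt, forall s, ple s t -> s <> t -> In s l;
  pinf_height : forall n : nat, exists c : nat -> pt,
      forall i, i < n -> ple (c i) (c (S i)) /\ c i <> c (S i) }.
Arguments ple {c0} _ _ : rename.
Arguments ple_refl {c0} a : rename.

Definition plt (A : CDPoset) (s t : A) : Prop := ple s t /\ s <> t.

(* A diagram F : A -> C, where u -> v iff u >= v. *)
Record Diagram (C : Category) (A : CDPoset) := {
  dob :> A -> Ob C;
  dmap : forall u v : A, ple v u -> Hom (dob u) (dob v);
  dmap_id : forall u (p : ple u u), dmap p = idm (dob u);
  dmap_comp : forall u v w (p : ple v u) (q : ple w v) (r : ple w u),
      comp (dmap q) (dmap p) = dmap r }.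
Arguments dmap {C A} _ {u v} _.

Lemma dmap_irr (C : Category) (A : CDPoset) (F : Diagram C A) (u v : A)
  (p q : ple v u) : dmap F p = dmap F q.
Proof.
  rewrite <- (comp_id_l (dmap F p)).
  rewrite <- (dmap_id F (ple_refl v)).
  apply dmap_comp.
Qed.

Definition strictly_increasing (A B : CDPoset) (alpha : B -> A) : Prop :=
  forall s t : B, plt s t -> plt (alpha s) (alpha t).

Lemma sinc_mono (A B : CDPoset) (alpha : B -> A) :
  strictly_increasing alpha -> forall s t : B, ple s t -> ple (alpha s) (alpha t).
Proof.
  intros H s t p. destruct (classic (s = t)) as [e|ne].
  - subst. apply ple_refl.
  - apply (H s t (conj p ne)).
Qed.

Record PMor (C : Category) (A B : CDPoset) (F : Diagram C A) (G : Diagram C B) := {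
  alpha : B -> A;
  alpha_sinc : strictly_increasing alpha;
  phi : forall b : B, Hom (F (alpha b)) (G b);
  phi_nat : forall (b b' : B) (p : ple b' b) (q : ple (alpha b') (alpha b)),
      comp (dmap G p) (phi b) = comp (phi b') (dmap F q) }.
Arguments alpha {C A B F G} _ _.
Arguments phi {C A B F G} _ _.
Arguments phi_nat {C A B F G} _ {b b'} p q.
Arguments alpha_sinc {C A B F G} _ _ _ _.

Definition pm_ge (C : Category) (A B : CDPoset) (F : Diagram C A) (G : Diagram C B)
    (f' f : PMor F G) : Prop :=
  forall b : B, exists p : ple (alpha f b) (alpha f' b),
    phi f' b = comp (phi f b) (dmap F p).

(* Two representatives define the same morphism of \bar{Pro}(C) iff they are
   connected by a chain of such relations. *)
Definition pm_eq (C : Category) (A B : CDPoset) (F : Diagram C A) (G : Diagram C B) :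
    PMor F G -> PMor F G -> Prop :=
  clos_refl_sym_trans _ (@pm_ge C A B F G).

Definition pm_id (C : Category) (A : CDPoset) (F : Diagram C A) : PMor F F.
Proof.
  refine {| alpha := fun a => a; phi := fun a => idm (F a) |}.
  - intros s t h; exact h.
  - intros b b' p q. rewrite comp_id_l, comp_id_r. apply dmap_irr.
Defined.

(* composite: first f : F -> G, then g : G -> H *)
Definition pm_comp (C : Category) (A B D : CDPoset) (F : Diagram C A)
    (G : Diagram C B) (H : Diagram C D) (f : PMor F G) (g : PMor G H) : PMor F H.
Proof.
  refine {| alpha := fun d => alpha f (alpha g d);
            phi := fun d => comp (phi g d) (phi f (alpha g d)) |}.
  - intros s t h. apply (alpha_sinc f). apply (alpha_sinc g). exact h.
  - intros d d' p q.
    assert (r : ple (alpha g d') (alpha g d)) by (apply sinc_mono; [apply alpha_sinc | exact p]).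
    rewrite comp_assoc, (phi_nat g p r), <- !comp_assoc, (phi_nat f r q).
    reflexivity.
Defined.

Definition pm_iso (C : Category) (A B : CDPoset) (F : Diagram C A) (G : Diagram C B)
    (f : PMor F G) : Prop :=
  exists g : PMor G F, pm_eq (pm_comp f g) (pm_id F) /\ pm_eq (pm_comp g f) (pm_id G).

Definition arrow_iso (C : Category) (A B A' B' : CDPoset)
    (F : Diagram C A) (G : Diagram C B) (F' : Diagram C A') (G' : Diagram C B')
    (f : PMor F G) (f' : PMor F' G') : Prop :=
  exists (i : PMor F F') (j : PMor G G'),
    pm_iso i /\ pm_iso j /\ pm_eq (pm_comp f j) (pm_comp i f').

Definition nat_level (C : Category) (A : CDPoset) (X Y : Diagram C A)
    (phi0 : forall a : A, Hom (X a) (Y a)) : Prop :=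
  forall (u v : A) (p : ple v u), comp (dmap Y p) (phi0 u) = comp (phi0 v) (dmap X p).

Definition level_pm (C : Category) (A : CDPoset) (X Y : Diagram C A)
    (phi0 : forall a : A, Hom (X a) (Y a)) (Hn : nat_level phi0) : PMor X Y.
Proof.
  refine {| alpha := fun a => a; phi := phi0 |}.
  - intros s t h; exact h.
  - intros b b' p q. rewrite (Hn b b' p). f_equal. apply dmap_irr.
Defined.

Definition Lw (C : Category) (N : MorClass C) (A B : CDPoset)
    (F : Diagram C A) (G : Diagram C B) (f : PMor F G) : Prop :=
  exists (A' : CDPoset) (X Y : Diagram C A') (phi0 : forall a : A', Hom (X a) (Y a))
         (Hn : nat_level phi0),
    (forall a, N _ _ (phi0 a)) /\ arrow_iso f (level_pm Hn).

Definition is_sublim (C : Category) (A : CDPoset) (X : Diagram C A) (t : A)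
    (L : Ob C) (pi : forall s : A, plt s t -> Hom L (X s)) : Prop :=
  (forall s s' (hs : plt s t) (hs' : plt s' t) (p : ple s' s),
      comp (dmap X p) (pi s hs) = pi s' hs') /\
  (forall (L' : Ob C) (pi' : forall s : A, plt s t -> Hom L' (X s)),
     (forall s s' (hs : plt s t) (hs' : plt s' t) (p : ple s' s),
         comp (dmap X p) (pi' s hs) = pi' s' hs') ->
     exists! u : Hom L' L, forall s hs, comp (pi s hs) u = pi' s hs).
Arguments is_sublim {C A} X t L pi.

Definition is_pullback (C : Category) (x y z : Ob C) (f : Hom x z) (g : Hom y z)
    (P : Ob C) (p1 : Hom P x) (p2 : Hom P y) : Prop :=
  comp f p1 = comp g p2 /\
  forall (Q : Ob C) (q1 : Hom Q x) (q2 : Hom Q y), comp f q1 = comp g q2 ->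
    exists! u : Hom Q P, comp p1 u = q1 /\ comp p2 u = q2.
Arguments is_pullback {C x y z} f g P p1 p2.

(* phi : X -> Y is "special" w.r.t. M: for every t the relative matching map
   X_t -> Y_t x_{lim_{s<t} Y_s} lim_{s<t} X_s is in M. *)
Definition special (C : Category) (M : MorClass C) (A : CDPoset) (X Y : Diagram C A)
    (phi0 : forall a : A, Hom (X a) (Y a)) : Prop :=
  forall t : A,
  exists (LX : Ob C) (piX : forall s, plt s t -> Hom LX (X s))
         (LY : Ob C) (piY : forall s, plt s t -> Hom LY (Y s))
         (a : Hom (Y t) LY) (c : Hom LX LY) (d : Hom (X t) LX)
         (P : Ob C) (p1 : Hom P (Y t)) (p2 : Hom P LX) (k : Hom (X t) P),
    is_sublim X t LX piX /\ is_sublim Y t LY piY /\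
    (forall s (hs : plt s t), comp (piY s hs) a = dmap Y (proj1 hs)) /\
    (forall s (hs : plt s t), comp (piY s hs) c = comp (phi0 s) (piX s hs)) /\
    (forall s (hs : plt s t), comp (piX s hs) d = dmap X (proj1 hs)) /\
    is_pullback a c P p1 p2 /\
    comp p1 k = phi0 t /\ comp p2 k = d /\
    M _ _ k.

Definition Sp (C : Category) (M : MorClass C) (A B : CDPoset)
    (F : Diagram C A) (G : Diagram C B) (f : PMor F G) : Prop :=
  exists (A' : CDPoset) (X Y : Diagram C A') (phi0 : forall a : A', Hom (X a) (Y a))
         (Hn : nat_level phi0),
    special M phi0 /\ arrow_iso f (level_pm Hn).

Definition pro_lifts (C : Category) (A B A' B' : CDPoset)
    (F : Diagram C A) (G : Diagram C B) (X : Diagram C A') (Y : Diagram C B')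
    (f : PMor F G) (g : PMor X Y) : Prop :=
  forall (u : PMor F X) (v : PMor G Y),
    pm_eq (pm_comp u g) (pm_comp f v) ->
    exists h : PMor G X, pm_eq (pm_comp f h) u /\ pm_eq (pm_comp h g) v.

Definition ProMorClass (C : Category) :=
  forall (A B : CDPoset) (F : Diagram C A) (G : Diagram C B), PMor F G -> Prop.

Definition pro_perp (C : Category) (K L : ProMorClass C) : Prop :=
  forall (A B A' B' : CDPoset) (F : Diagram C A) (G : Diagram C B)
         (X : Diagram C A') (Y : Diagram C B') (f : PMor F G) (g : PMor X Y),
    K A B F G f -> L A' B' X Y g -> pro_lifts f g.

(* Main.v *)
Require Import Defs.
From Stdlib Require Import Relations Classical List ClassicalEpsilon FunctionalExtensionality Setoid Morphisms Wellfounded Lia FinFun Arith Eqdep.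
Set Implicit Arguments.

Lemma plt_trans {A : CDPoset} (a b c : A) : plt a b -> plt b c -> plt a c.
Proof.
  intros [h1 n1] [h2 n2]. split. eapply ple_trans; eauto.
  intro e. subst. apply n1. apply ple_antisym; auto.
Qed.

Lemma ple_plt_trans {A : CDPoset} (a b c : A) : ple a b -> plt b c -> plt a c.
Proof.
  intros h1 [h2 n2]. split. eapply ple_trans; eauto.
  intro e. subst. apply n2. apply ple_antisym; auto.
Qed.

Lemma chain_lt {A : CDPoset} (c : nat -> A) (n : nat) :
  (forall i, i < n -> ple (c i) (c (S i)) /\ c i <> c (S i)) ->
  forall i j, i < j -> j <= n -> plt (c i) (c j).
Proof.
  intros H i j hij. induction hij as [|j hij IH]; intros hj.
  - apply H. lia.
  - eapply plt_trans. apply IH. lia. apply H. lia.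
Qed.

Lemma exists_above {A : CDPoset} (b : A) : exists a, plt b a.
Proof.
  apply NNPP. intro Hno.
  assert (Hmax : forall x, ple x b).
  { intro x. destruct (pdir_ub x b) as [c [h1 h2]].
    destruct (classic (b = c)) as [e|ne]. subst; auto.
    exfalso. apply Hno. exists c. split; auto. }
  destruct (pcofinite b) as [l Hl].
  destruct (pinf_height A (S (length l))) as [c Hc].
  assert (Hin : incl (map c (seq 0 (S (S (length l))))) (b :: l)).
  { intros y Hy. apply in_map_iff in Hy. destruct Hy as [i [e _]]. subst.
    destruct (classic (c i = b)) as [e|ne]. rewrite e; left; auto.
    right. apply Hl; auto. }
  assert (Hnd : NoDup (map c (seq 0 (S (S (length l)))))).
  { apply Injective_map_NoDup_in.
    - intros i j Hi Hj e. apply in_seq in Hi. apply in_seq in Hj.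
      destruct (Nat.lt_trichotomy i j) as [h|[h|h]]; auto.
      + exfalso. destruct (chain_lt c Hc h ltac:(lia)) as [_ ne]; auto.
      + exfalso. destruct (chain_lt c Hc h ltac:(lia)) as [_ ne]; auto.
    - apply seq_NoDup. }
  pose proof (NoDup_incl_length Hnd Hin) as Hlen.
  rewrite length_map, length_seq in Hlen. simpl in Hlen. lia.
Qed.

Lemma ub_list {A : CDPoset} (x0 : A) (l : list A) :
  exists a, ple x0 a /\ forall y, In y l -> ple y a.
Proof.
  induction l as [|y l IH].
  - exists x0. split. apply ple_refl. intros y [].
  - destruct IH as [a [h1 h2]]. destruct (pdir_ub a y) as [b [g1 g2]].
    exists b. split. eapply ple_trans; eauto.
    intros z [e|hz]. subst; auto. eapply ple_trans; eauto.
Qed.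

Lemma sub_list {A : CDPoset} (x0 : A) (l : list A) :
  exists a, ple x0 a /\ forall y, In y l -> plt y a.
Proof.
  destruct (ub_list x0 l) as [b [h1 h2]]. destruct (exists_above b) as [a ha].
  exists a. split. eapply ple_trans; eauto. apply ha.
  intros y hy. eapply ple_plt_trans; eauto.
Qed.

Lemma plt_wf {A : CDPoset} : well_founded (@plt A).
Proof.
  assert (H : forall n (t : A) l, (forall s, plt s t -> In s l) -> length l <= n -> Acc (@plt A) t).
  { induction n as [|n IH]; intros t l Hl Hlen.
    - constructor. intros s hs. apply Hl in hs. destruct l; simpl in *; [destruct hs| lia].
    - constructor. intros s hs.
      pose (l' := filter (fun x => if excluded_middle_informative (x = s) then false else true) l).
      apply (IH s l').
      + intros r hr. apply filter_In. split. apply Hl. eapply plt_trans; eauto.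
        destruct (excluded_middle_informative (r = s)); auto. subst. destruct hr; contradiction.
      + assert (length l' < length l); [|lia].
        rewrite <- (filter_length (fun x => if excluded_middle_informative (x = s) then false else true) l).
        fold l'.
        assert (Hs : In s (filter (fun x => negb (if excluded_middle_informative (x = s) then false else true)) l)).
        { apply filter_In. split. apply Hl; auto.
          destruct (excluded_middle_informative (s = s)); auto. }
        revert Hs. generalize (filter (fun x => negb (if excluded_middle_informative (x = s) then false else true)) l).
        intros k Hk. destruct k; [destruct Hk| simpl; lia]. }
  intro t. destruct (pcofinite t) as [l Hl]. apply (H (length l) t l); auto. intros s [h1 h2]; auto.
Qed.

Lemma dmap_comp' (C : Category) (A : CDPoset) (F : Diagram C A) (u v w : A)
  (p : ple v u) (q : ple w v) (r : ple w u) : comp (dmap F q) (dmap F p) = dmap F r.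
Proof. apply dmap_comp. Qed.

Lemma dmap_refl (C : Category) (A : CDPoset) (F : Diagram C A) (u : A) (p : ple u u) :
  dmap F p = idm (F u).
Proof. apply dmap_id. Qed.

Instance pm_eq_equiv (C : Category) (A B : CDPoset) (F : Diagram C A) (G : Diagram C B) :
  Equivalence (@pm_eq C A B F G).
Proof.
  split.
  - intro x. apply rst_refl.
  - intros x y h. apply rst_sym. exact h.
  - intros x y z h1 h2. eapply rst_trans; eauto.
Qed.

Lemma ge_comp_l (C : Category) (A B D : CDPoset) (F : Diagram C A) (G : Diagram C B)
  (H : Diagram C D) (m m' : PMor F G) (n : PMor G H) :
  pm_ge m' m -> pm_ge (pm_comp m' n) (pm_comp m n).
Proof.
  intros h d. destruct (h (alpha n d)) as [p e]. exists p. simpl.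
  rewrite e, comp_assoc. reflexivity.
Qed.

Lemma ge_comp_r (C : Category) (A B D : CDPoset) (F : Diagram C A) (G : Diagram C B)
  (H : Diagram C D) (n : PMor F G) (m m' : PMor G H) :
  pm_ge m' m -> pm_ge (pm_comp n m') (pm_comp n m).
Proof.
  intros h d. destruct (h d) as [p e].
  assert (q : ple (alpha n (alpha m d)) (alpha n (alpha m' d))).
  { apply sinc_mono. apply alpha_sinc. exact p. }
  exists q. simpl. rewrite e, <- comp_assoc, (phi_nat n p q), comp_assoc. reflexivity.
Qed.

Instance pm_comp_proper (C : Category) (A B D : CDPoset) (F : Diagram C A) (G : Diagram C B)
  (H : Diagram C D) : Proper (@pm_eq C A B F G ==> @pm_eq C B D G H ==> @pm_eq C A D F H) (@pm_comp C A B D F G H).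
Proof.
  intros m m' hm n n' hn. transitivity (pm_comp m' n).
  - induction hm.
    + apply rst_step. apply ge_comp_l. auto.
    + reflexivity.
    + symmetry; auto.
    + etransitivity; eauto.
  - induction hn.
    + apply rst_step. apply ge_comp_r. auto.
    + reflexivity.
    + symmetry; auto.
    + etransitivity; eauto.
Qed.

Lemma pm_assoc (C : Category) (A B D E : CDPoset) (F : Diagram C A) (G : Diagram C B)
  (H : Diagram C D) (K : Diagram C E) (a : PMor F G) (b : PMor G H) (c : PMor H K) :
  pm_eq (pm_comp (pm_comp a b) c) (pm_comp a (pm_comp b c)).
Proof.
  apply rst_step. intro d. exists (ple_refl _). simpl.
  rewrite dmap_refl, comp_id_r, comp_assoc. reflexivity.
Qed.

Lemma pm_id_l (C : Category) (A B : CDPoset) (F : Diagram C A) (G : Diagram C B)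
  (f : PMor F G) : pm_eq (pm_comp (pm_id F) f) f.
Proof.
  apply rst_step. intro d. exists (ple_refl _). simpl.
  rewrite dmap_refl, !comp_id_r. reflexivity.
Qed.

Lemma pm_id_r (C : Category) (A B : CDPoset) (F : Diagram C A) (G : Diagram C B)
  (f : PMor F G) : pm_eq (pm_comp f (pm_id G)) f.
Proof.
  apply rst_step. intro d. exists (ple_refl _). simpl.
  rewrite dmap_refl, comp_id_r, comp_id_l. reflexivity.
Qed.

Lemma transport (C : Category)
  (A B A1 B1 A' B' A2 B2 : CDPoset)
  (F : Diagram C A) (G : Diagram C B) (X : Diagram C A1) (Y : Diagram C B1)
  (F' : Diagram C A') (G' : Diagram C B') (Z : Diagram C A2) (W : Diagram C B2)
  (f : PMor F G) (fl : PMor X Y) (g : PMor F' G') (gl : PMor Z W) :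
  arrow_iso f fl -> arrow_iso g gl -> pro_lifts fl gl -> pro_lifts f g.
Proof.
  intros [i [j [[i_ [hi1 hi2]] [[j_ [hj1 hj2]] hf]]]].
  intros [i' [j' [[i'_ [hi'1 hi'2]] [[j'_ [hj'1 hj'2]] hg]]]].
  intros Hl u v Huv.
  destruct (Hl (pm_comp i_ (pm_comp u i')) (pm_comp j_ (pm_comp v j'))) as [Hh [e1 e2]].
  -
    assert (E1 : pm_eq (pm_comp i_ f) (pm_comp fl j_)).
    { rewrite <- (pm_id_r (pm_comp i_ f)). rewrite <- hj1.
      rewrite <- pm_assoc, (pm_assoc i_ f j), hf.
      rewrite <- pm_assoc, hi2, pm_id_l. reflexivity. }
    rewrite (pm_assoc i_ (pm_comp u i') gl), (pm_assoc u i' gl), <- hg.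
    rewrite <- (pm_assoc u g j'), Huv, (pm_assoc f v j').
    rewrite <- (pm_assoc i_ f (pm_comp v j')), E1, pm_assoc. reflexivity.
  - exists (pm_comp j (pm_comp Hh i'_)). split.
    + rewrite <- (pm_assoc f j (pm_comp Hh i'_)), hf, (pm_assoc i fl (pm_comp Hh i'_)).
      rewrite <- (pm_assoc fl Hh i'_), e1, (pm_assoc i_ (pm_comp u i') i'_).
      rewrite <- (pm_assoc i i_), hi1, pm_id_l, pm_assoc, hi'1, pm_id_r. reflexivity.
    + assert (E2 : pm_eq (pm_comp i'_ g) (pm_comp gl j'_)).
      { rewrite <- (pm_id_r (pm_comp i'_ g)). rewrite <- hj'1.
        rewrite <- pm_assoc, (pm_assoc i'_ g j'), hg.
        rewrite <- pm_assoc, hi'2, pm_id_l. reflexivity. }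
      rewrite (pm_assoc j (pm_comp Hh i'_) g), (pm_assoc Hh i'_ g), E2.
      rewrite <- (pm_assoc Hh gl j'_), e2, (pm_assoc j_ (pm_comp v j') j'_).
      rewrite <- (pm_assoc j j_), hj1, pm_id_l, pm_assoc, hj'1, pm_id_r. reflexivity.
Qed.

Definition Ev (C : Category) (A B : CDPoset) (F : Diagram C A) (G : Diagram C B)
  (m1 m2 : PMor F G) : Prop :=
  forall b, exists c (p1 : ple (alpha m1 b) c) (p2 : ple (alpha m2 b) c),
    comp (phi m1 b) (dmap F p1) = comp (phi m2 b) (dmap F p2).

Lemma pm_eq_Ev (C : Category) (A B : CDPoset) (F : Diagram C A) (G : Diagram C B)
  (m1 m2 : PMor F G) : pm_eq m1 m2 -> Ev m1 m2.
Proof.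
  intro h. induction h as [x y h|x|x y h IH|x y z h1 IH1 h2 IH2].
  - intro b. destruct (h b) as [p e]. exists (alpha x b), (ple_refl _), p.
    rewrite e, dmap_refl, comp_id_r. reflexivity.
  - intro b. exists (alpha x b), (ple_refl _), (ple_refl _). reflexivity.
  - intro b. destruct (IH b) as [c [p1 [p2 e]]]. exists c, p2, p1. auto.
  - intro b. destruct (IH1 b) as [c1 [p1 [p2 e1]]]. destruct (IH2 b) as [c2 [q1 [q2 e2]]].
    destruct (pdir_ub c1 c2) as [d [r1 r2]].
    exists d, (ple_trans p1 r1), (ple_trans q2 r2).
    rewrite <- (dmap_comp F r1 p1 (ple_trans p1 r1)).
    rewrite <- (dmap_comp F r2 q2 (ple_trans q2 r2)).
    rewrite !comp_assoc, e1, <- e2.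
    rewrite <- !comp_assoc, (dmap_comp F r1 p2 (ple_trans p2 r1)), (dmap_comp F r2 q1 (ple_trans q1 r2)).
    f_equal. apply dmap_irr.
Qed.

Lemma sublim_ext (C : Category) (A : CDPoset) (X : Diagram C A) (t : A) (L : Ob C)
  (pi : forall s : A, plt s t -> Hom L (X s)) :
  is_sublim X t L pi -> forall (Q : Ob C) (x y : Hom Q L),
  (forall s hs, comp (pi s hs) x = comp (pi s hs) y) -> x = y.
Proof.
  intros [H1 H2] Q x y Hxy.
  destruct (H2 Q (fun s hs => comp (pi s hs) x)) as [w [Hw Hu]].
  - intros s s' hs hs' p. rewrite comp_assoc, (H1 s s' hs hs' p). reflexivity.
  - transitivity w. symmetry. apply Hu. auto.
    apply Hu. intros. symmetry. apply Hxy.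
Qed.

Lemma pb_ext (C : Category) (x y z : Ob C) (f : Hom x z) (g : Hom y z) (P : Ob C)
  (p1 : Hom P x) (p2 : Hom P y) : is_pullback f g P p1 p2 ->
  forall Q (m n : Hom Q P), comp p1 m = comp p1 n -> comp p2 m = comp p2 n -> m = n.
Proof.
  intros [Hc Hu] Q m n e1 e2.
  destruct (Hu Q (comp p1 m) (comp p2 m)) as [w [Hw Hw']].
  - rewrite !comp_assoc, Hc. reflexivity.
  - transitivity w. symmetry. apply Hw'. auto. apply Hw'. auto.
Qed.

Definition OT (C : Category) (A1 A2 : CDPoset) (Y : Diagram C A1) (Z : Diagram C A2) (t : A2) :=
  option (@sigT A1 (fun a => Hom (Y a) (Z t))).

Definition Good (C : Category) (A1 A2 : CDPoset) (X Y : Diagram C A1) (Z W : Diagram C A2)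
  (ph : forall a, Hom (X a) (Y a)) (ps : forall a, Hom (Z a) (W a))
  (u : PMor X Z) (v : PMor Y W) (t : A2) (rec : forall s, plt s t -> OT Y Z s)
  (a : A1) (h : Hom (Y a) (Z t)) : Prop :=
  (exists p : ple (alpha u t) a, comp h (ph a) = comp (phi u t) (dmap X p)) /\
  (exists p : ple (alpha v t) a, comp (ps t) h = comp (phi v t) (dmap Y p)) /\
  (forall s (hs : plt s t), exists a_s h_s, rec s hs = Some (existT _ a_s h_s) /\
     plt a_s a /\ exists p : ple a_s a, comp (dmap Z (proj1 hs)) h = comp h_s (dmap Y p)).

Definition body (C : Category) (A1 A2 : CDPoset) (X Y : Diagram C A1) (Z W : Diagram C A2)
  (ph : forall a, Hom (X a) (Y a)) (ps : forall a, Hom (Z a) (W a))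
  (u : PMor X Z) (v : PMor Y W) (t : A2) (rec : forall s, plt s t -> OT Y Z s) : OT Y Z t :=
  match excluded_middle_informative (exists a h, Good ph ps u v rec a h) with
  | left e => let s := constructive_indefinite_description _ e in
      Some (existT _ (proj1_sig s) (proj1_sig (constructive_indefinite_description _ (proj2_sig s))))
  | right _ => None
  end.

Lemma body_spec (C : Category) (A1 A2 : CDPoset) (X Y : Diagram C A1) (Z W : Diagram C A2)
  (ph : forall a, Hom (X a) (Y a)) (ps : forall a, Hom (Z a) (W a))
  (u : PMor X Z) (v : PMor Y W) (t : A2) (rec : forall s, plt s t -> OT Y Z s) :
  (exists a h, Good ph ps u v rec a h) ->
  exists a h, body ph ps u v rec = Some (existT _ a h) /\ Good ph ps u v rec a h.
Proof.
  intro e. unfold body. destruct (excluded_middle_informative _) as [e'|n]; [|contradiction].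
  destruct (constructive_indefinite_description _ e') as [a Ha]. simpl.
  destruct (constructive_indefinite_description _ Ha) as [h Hh]. simpl.
  exists a, h. auto.
Qed.

Lemma step (C : Category) (N M : MorClass C) (HNM : perp N M) (A1 A2 : CDPoset)
  (X Y : Diagram C A1) (Z W : Diagram C A2)
  (ph : forall a, Hom (X a) (Y a)) (ps : forall a, Hom (Z a) (W a))
  (Hn : nat_level ph) (HN : forall a, N _ _ (ph a)) (HM : special M ps)
  (u : PMor X Z) (v : PMor Y W)
  (HE : forall t, exists c (p1 : ple (alpha u t) c) (p2 : ple (alpha v t) c),
      comp (comp (ps t) (phi u t)) (dmap X p1) = comp (comp (phi v t) (ph (alpha v t))) (dmap X p2))
  (G : forall s, OT Y Z s) (t : A2)
  (IH : forall s, plt s t -> exists a h, G s = Some (existT _ a h) /\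
          Good ph ps u v (t:=s) (fun s' _ => G s') a h) :
  exists a h, Good ph ps u v (t:=t) (fun s _ => G s) a h.
Proof.
  destruct (HE t) as [c [pc1 [pc2 Heq]]].
  destruct (pcofinite t) as [l Hl].
  pose (g := fun s => match G s with Some (existT _ a _) => a | None => alpha u t end).
  destruct (sub_list c (map g l)) as [a [hca hlt]].
  assert (Hlt : forall s (hs : plt s t) a_s h_s, G s = Some (existT _ a_s h_s) -> plt a_s a).
  { intros s hs a_s h_s e. replace a_s with (g s). apply hlt. apply in_map.
    apply Hl; [exact (proj1 hs) | exact (proj2 hs)]. unfold g. rewrite e. reflexivity. }
  assert (Q : forall s (hs : plt s t), {m : Hom (Y a) (Z s) | exists a_s h_s (p : ple a_s a),
     G s = Some (existT _ a_s h_s) /\ m = comp h_s (dmap Y p)}).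
  { intros s hs. apply constructive_indefinite_description.
    destruct (IH s hs) as [a_s [h_s [e Hg]]].
    exists (comp h_s (dmap Y (proj1 (Hlt s hs a_s h_s e)))), a_s, h_s, (proj1 (Hlt s hs a_s h_s e)).
    auto. }
  pose (q := fun s hs => proj1_sig (Q s hs)).
  assert (Qe : forall s hs a_s h_s (p : ple a_s a), G s = Some (existT _ a_s h_s) ->
             q s hs = comp h_s (dmap Y p)).
  { intros s hs a_s h_s p H. unfold q. destruct (Q s hs) as [m [a' [h' [p' [e' em]]]]]. simpl.
    rewrite H in e'. injection e' as e1 e2. subst a'. apply inj_pair2 in e2. subst.
    f_equal. apply dmap_irr. }
  destruct (HM t) as [LX [piX [LY [piY [a' [c' [d [P [p1 [p2 [k [HLX [HLY [Ha [Hc [Hd [Hpb [Hk1 [Hk2 HkM]]]]]]]]]]]]]]]]]]].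
  assert (Hcone : forall s s' (hs : plt s t) (hs' : plt s' t) (p : ple s' s),
             comp (dmap Z p) (q s hs) = q s' hs').
  { intros s s' hs hs' p.
    destruct (IH s hs) as [a_s [h_s [e Hg]]].
    pose (ps_ := proj1 (Hlt s hs a_s h_s e)).
    destruct (classic (s' = s)) as [eq|ne].
    - subst s'. rewrite (Qe s hs a_s h_s ps_ e), (Qe s hs' a_s h_s ps_ e).
      rewrite dmap_refl, comp_id_l. reflexivity.
    - destruct (IH s' hs') as [a_s' [h_s' [e' Hg']]].
      pose (ps'_ := proj1 (Hlt s' hs' a_s' h_s' e')).
      rewrite (Qe s hs a_s h_s ps_ e), (Qe s' hs' a_s' h_s' ps'_ e').
      destruct Hg as [_ [_ H3]]. destruct (H3 s' (conj p ne)) as [a'' [h'' [e'' [hlt'' [p'' E'']]]]].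
      simpl in e''. rewrite e' in e''. injection e'' as e1 e2. subst a''.
      apply inj_pair2 in e2. subst h''. rewrite (dmap_irr Z (proj1 (conj p ne)) p) in E''.
      rewrite comp_assoc, E'', <- comp_assoc, (dmap_comp Y ps_ p'' (ple_trans p'' ps_)).
      f_equal. apply dmap_irr. }
  destruct (proj2 HLX (Y a) q Hcone) as [q2 [Hq2 _]].
  pose (pv := ple_trans pc2 hca). pose (pu := ple_trans pc1 hca).
  pose (q1 := comp (phi v t) (dmap Y pv)).
  assert (Hsq1 : comp a' q1 = comp c' q2).
  { apply (sublim_ext HLY). intros s hs. rewrite !comp_assoc, Ha, Hc.
    rewrite <- comp_assoc, Hq2. unfold q1.
    destruct (IH s hs) as [a_s [h_s [e Hg]]].
    pose (ps_ := proj1 (Hlt s hs a_s h_s e)). rewrite (Qe s hs a_s h_s ps_ e).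
    destruct Hg as [_ [[pvs E2] _]].
    rewrite (comp_assoc (ps s)), E2.
    pose (qv := sinc_mono (alpha_sinc v) (proj1 hs)).
    rewrite (comp_assoc (dmap W (proj1 hs))), (phi_nat v (proj1 hs) qv).
    rewrite <- !comp_assoc, (dmap_comp Y pv qv (ple_trans qv pv)),
      (dmap_comp Y ps_ pvs (ple_trans pvs ps_)).
    f_equal. apply dmap_irr. }
  destruct (proj2 Hpb (Y a) q1 q2 Hsq1) as [bot [[Hb1 Hb2] _]].
  pose (top := comp (phi u t) (dmap X pu)).
  assert (Hsq : comp k top = comp bot (ph a)).
  { apply (pb_ext Hpb).
    - rewrite !comp_assoc, Hk1, Hb1. unfold top, q1.
      rewrite <- (comp_assoc (phi v t)), (Hn _ _ pv), comp_assoc.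
      rewrite <- (dmap_comp X hca pc1 pu), <- (dmap_comp X hca pc2 pv).
      rewrite !comp_assoc, Heq. reflexivity.
    - rewrite !comp_assoc, Hk2, Hb2. apply (sublim_ext HLX). intros s hs.
      rewrite !comp_assoc, Hd, Hq2. unfold top.
      destruct (IH s hs) as [a_s [h_s [e Hg]]].
      pose (ps_ := proj1 (Hlt s hs a_s h_s e)). rewrite (Qe s hs a_s h_s ps_ e).
      destruct Hg as [[pus E1] _].
      rewrite <- (comp_assoc h_s), (Hn _ _ ps_), (comp_assoc h_s), E1.
      pose (qu := sinc_mono (alpha_sinc u) (proj1 hs)).
      rewrite (comp_assoc (dmap Z (proj1 hs))), (phi_nat u (proj1 hs) qu).
      rewrite <- !comp_assoc, (dmap_comp X pu qu (ple_trans qu pu)),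
        (dmap_comp X ps_ pus (ple_trans pus ps_)).
      f_equal. apply dmap_irr. }
  destruct (HNM _ _ (ph a) _ _ k (HN a) HkM top bot Hsq) as [h [Hh1 Hh2]].
  exists a, h. split; [|split].
  - exists pu. exact Hh1.
  - exists pv. rewrite <- Hk1, <- comp_assoc, Hh2, Hb1. reflexivity.
  - intros s hs. destruct (IH s hs) as [a_s [h_s [e Hg]]]. exists a_s, h_s. split. exact e.
    split. apply (Hlt s hs a_s h_s e).
    exists (proj1 (Hlt s hs a_s h_s e)).
    rewrite <- Hd, <- Hk2, <- !comp_assoc, Hh2, Hb2, Hq2.
    apply Qe. exact e.
Qed.

Lemma core (C : Category) (N M : MorClass C) (HNM : perp N M) (A1 A2 : CDPoset)
  (X Y : Diagram C A1) (Z W : Diagram C A2)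
  (ph : forall a, Hom (X a) (Y a)) (ps : forall a, Hom (Z a) (W a))
  (Hn : nat_level ph) (HN : forall a, N _ _ (ph a)) (Hm : nat_level ps) (HM : special M ps) :
  pro_lifts (level_pm Hn) (level_pm Hm).
Proof.
  intros u v Huv. apply pm_eq_Ev in Huv.
  assert (HE : forall t, exists c (p1 : ple (alpha u t) c) (p2 : ple (alpha v t) c),
      comp (comp (ps t) (phi u t)) (dmap X p1) = comp (comp (phi v t) (ph (alpha v t))) (dmap X p2)).
  { intro t. destruct (Huv t) as [c [p1 [p2 e]]]. exists c, p1, p2. exact e. }
  pose (Hsol := Fix (plt_wf (A:=A2)) (OT Y Z) (fun t rec => body ph ps u v (t:=t) rec)).
  assert (Hfix : forall t, Hsol t = body ph ps u v (t:=t) (fun s _ => Hsol s)).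
  { intro t. unfold Hsol. apply Fix_eq. intros x f g H.
    assert (f = g) by (apply functional_extensionality_dep; intro y;
                       apply functional_extensionality_dep; intro p; apply H).
    subst. reflexivity. }
  assert (Inv : forall t, exists a h, Hsol t = Some (existT _ a h) /\
                  Good ph ps u v (t:=t) (fun s _ => Hsol s) a h).
  { intro t. induction t as [t IH] using (well_founded_ind (plt_wf (A:=A2))).
    rewrite (Hfix t). apply body_spec. eapply step; eauto. }
  assert (Ch : forall t, {p : @sigT A1 (fun a => Hom (Y a) (Z t)) | Hsol t = Some p /\
              Good ph ps u v (t:=t) (fun s _ => Hsol s) (projT1 p) (projT2 p)}).
  { intro t. apply constructive_indefinite_description.
    destruct (Inv t) as [a [h [e Gd]]]. exists (existT _ a h). auto. }
  pose (al := fun t => projT1 (proj1_sig (Ch t))).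
  pose (hh := fun t => projT2 (proj1_sig (Ch t)) : Hom (Y (al t)) (Z t)).
  assert (Sp : forall t, Hsol t = Some (existT _ (al t) (hh t)) /\
                 Good ph ps u v (t:=t) (fun s _ => Hsol s) (al t) (hh t)).
  { intro t. unfold hh, al. destruct (Ch t) as [[a h] [e Gd]]. simpl. auto. }
  assert (K3 : forall s t (hs : plt s t), plt (al s) (al t) /\
      exists p : ple (al s) (al t), comp (dmap Z (proj1 hs)) (hh t) = comp (hh s) (dmap Y p)).
  { intros s t hs. destruct (Sp t) as [_ [_ [_ H3]]].
    destruct (H3 s hs) as [a_s [h_s [e [hl [p E]]]]]. simpl in e.
    destruct (Sp s) as [e' _]. rewrite e' in e. injection e as e1 e2. subst a_s.
    apply inj_pair2 in e2. subst h_s. split; auto. exists p; auto. }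
  assert (Hs : strictly_increasing al). { intros s t hs. apply (K3 s t hs). }
  assert (Hnat : forall b b' (p : ple b' b) (q : ple (al b') (al b)),
             comp (dmap Z p) (hh b) = comp (hh b') (dmap Y q)).
  { intros b b' p q. destruct (classic (b' = b)) as [e|ne].
    - subst. rewrite !dmap_refl, comp_id_l, comp_id_r. reflexivity.
    - destruct (K3 b' b (conj p ne)) as [_ [p' E]].
      rewrite (dmap_irr Z p (proj1 (conj p ne))), E. f_equal. apply dmap_irr. }
  exists {| alpha := al; alpha_sinc := Hs; phi := hh; phi_nat := Hnat |}.
  split; apply rst_step; intro b.
  - destruct (Sp b) as [_ [[p E] _]]. exists p. simpl. exact E.
  - destruct (Sp b) as [_ [_ [[p E] _]]]. exists p. simpl. exact E.
Qed.

Theorem lemma4p7 (C : Category) (N M : MorClass C) :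
  has_finite_limits C -> perp N M ->
  pro_perp (fun A B F G f => @Lw C N A B F G f) (fun A B F G f => @Sp C M A B F G f).
Proof.
  intros _ HNM A B A' B' F G X Y f g [A1 [X1 [Y1 [ph [Hn [HN Hf]]]]]]
    [A2 [Z [W [ps [Hm [HM Hg]]]]]].
  eapply transport. exact Hf. exact Hg. eapply core; eauto.
Qed.
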